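(* Let $g=\begin{pmatrix}A&B\\C&D\end{pmatrix}\in SL_{2n+2}(\mathbb{C})$ with $A,B,C,D\in M_{n+1}(\mathbb{C})$ and $\det C\neq0$, acting on $\mathbb{P}^{2n+1}$. Then the pull-back of the volume form $dV$ satisfies $g^*dV=\mu_g^{4(n+1)}\,dV$, where $\mu_g(z)=\dfrac{\|z''\|}{\|Cz'+Dz''\|}$.
   Context: Write points of $\mathbb{P}^{2n+1}$ as $[z':z'']$ with $z'=(z^0,\dots,z^n)$, $z''=(z^{n+1},\dots,z^{2n+1})$; $\|\cdot\|$ is the Euclidean norm. Let $E=\mathbb{P}^{2n+1}\setminus\{z''=0\}$, covered by $U_\alpha=\{z^{n+\alpha}\neq0\}$, $1\leq\alpha\leq n+1$. On $U_\alpha$ use coordinates $\zeta_\alpha^j=z^j/z^{n+\alpha}$ ($0\le j\le n$), $x_\alpha^k=z^{n+k}/z^{n+\alpha}$ for $1\le k<\alpha$ and $x_\alpha^{k-1}=z^{n+k}/z^{n+\alpha}$ for $\alpha<k\le n+1$. Set $d\zeta_\alpha=d\zeta_\alpha^0\wedge\cdots\wedge d\zeta_\alpha^n$, $dx_\alpha=dx_\alpha^1\wedge\cdots\wedge dx_\alpha^n$, $\|x_\alpha\|^2=\sum_{k=1}^n|x_\alpha^k|^2$, and $dV=\sqrt{-1}(1+\|x_\alpha\|^2)^{-2(n+1)}d\zeta_\alpha\wedge\overline{d\zeta_\alpha}\wedge dx_\alpha\wedge\overline{dx_\alpha}$ on $U_\alpha$; these local forms agree on overlaps and define a global volume form $dV$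 on $E$. The identity is understood where both sides are defined. *)

(* Defs.v *)
From HB Require Import structures.
From mathcomp Require Import all_boot all_order all_algebra.
From mathcomp Require Import all_classical all_reals.
From mathcomp Require Import topology normedtype derive.
From mathcomp Require Import complex.

Set Implicit Arguments.
Unset Strict Implicit.
Unset Printing Implicit Defensive.

Import Order.TTheory GRing.Theory Num.Theory.
Local Open Scope ring_scope.

Section Defs.
Variables (R : realType) (n : nat).

(* Homogeneous coordinates z = [z' : z''] of P^{2n+1}, z' = (z^0..z^n),
   z'' = (z^{n+1}..z^{2n+1}); z' is indexed by lshift, z'' by rshift. *)
Definition hpoint := 'I_(n.+1 + n.+1) -> R[i].
Definition zp (z : hpoint) (j : 'I_n.+1) : R[i] := z (lshift n.+1 j).
Definition zpp (z : hpoint) (k : 'I_n.+1) : R[i] := z (rshift n.+1 k).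

Definition sqmod (c : R[i]) : R := complex.Re c ^+ 2 + complex.Im c ^+ 2.

Definition norm_zpp (z : hpoint) : R :=
  Num.sqrt (\sum_(k < n.+1) sqmod (zpp z k)).

Definition act (g : 'M[R[i]]_(n.+1 + n.+1)) (z : hpoint) : hpoint :=
  fun i => \sum_j g i j * z j.

Definition blkC (g : 'M[R[i]]_(n.+1 + n.+1)) : 'M[R[i]]_n.+1 :=
  \matrix_(i, j) g (rshift n.+1 i) (lshift n.+1 j).
Definition blkD (g : 'M[R[i]]_(n.+1 + n.+1)) : 'M[R[i]]_n.+1 :=
  \matrix_(i, j) g (rshift n.+1 i) (rshift n.+1 j).

Definition mu (g : 'M[R[i]]_(n.+1 + n.+1)) (z : hpoint) : R :=
  norm_zpp z /
  Num.sqrt (\sum_(i < n.+1)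
     sqmod (\sum_(j < n.+1) (blkC g i j * zp z j + blkD g i j * zpp z j))).

(* Affine chart U_alpha (alpha is 0-based here: paper's alpha = alpha+1).
   Complex chart coordinates: (zeta^0..zeta^n, x^1..x^n), indexed by
   'I_(n.+1 + n): zeta^j at lshift, x^{k+1} (0-based k) at rshift. *)
Definition ccoord := 'I_(n.+1 + n) -> R[i].

Definition xat (c : ccoord) (m : nat) : R[i] :=
  if @insub nat (fun m => m < n)%N 'I_n m is Some k then c (rshift n.+1 k)
  else 0.

Definition chart_inv (alpha : 'I_n.+1) (c : ccoord) : hpoint :=
  fun i => match fintype.split i with
  | inl j => c (lshift n j)
  | inr k =>
      if (k : nat) == alpha then 1
      else if (k < alpha)%N then xat c k
      else xat c k.-1
  end.

Definition chart (beta : 'I_n.+1) (z : hpoint) : ccoord :=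
  fun i => match fintype.split i with
  | inl j => zp z j / zpp z beta
  | inr k =>
      if (k < beta)%N then zpp z (inord k) / zpp z beta
      else zpp z (inord k.+1) / zpp z beta
  end.

(* Identification C^{2n+1} = R^{2(2n+1)}: real parts then imaginary parts. *)
Definition rcoord := 'rV[R]_((n.+1 + n) + (n.+1 + n)).
Definition cplx (w : rcoord) : ccoord :=
  fun k => Complex (w 0 (lshift _ k)) (w 0 (rshift _ k)).
Definition realify (c : ccoord) : rcoord :=
  \row_i match fintype.split i with inl k => complex.Re (c k) | inr k => complex.Im (c k) end.

(* density of dV w.r.t. the coordinate form sqrt(-1) dzeta^dzeta-bar^dx^dx-bar
   on U_alpha: (1 + ||x_alpha||^2)^{-2(n+1)} *)
Definition dens (w : rcoord) : R :=
  (1 + \sum_(k < n) sqmod (cplx w (rshift n.+1 k))) ^- (2 * n.+1).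

(* g in the charts: phi_beta o g o phi_alpha^{-1}, as a map R^{2(2n+1)} ->
   R^{2(2n+1)} (defined near points whose image lies in U_beta). *)
Definition gloc (g : 'M[R[i]]_(n.+1 + n.+1)) (alpha beta : 'I_n.+1)
  (w : rcoord) : rcoord :=
  realify (chart beta (act g (chart_inv alpha (cplx w)))).

End Defs.

(* Main.v *)
Require Import Defs.
From HB Require Import structures.
From mathcomp Require Import all_boot all_order all_algebra.
From mathcomp Require Import all_classical all_reals.
From mathcomp Require Import topology normedtype derive.
From mathcomp Require Import complex.
From mathcomp Require Import zify ring lra.
Import Order.TTheory GRing.Theory Num.Theory.
Import numFieldNormedType.Exports.
Local Open Scope ring_scope.

Set Implicit Arguments.
Unset Strict Implicit.
Unset Printing Implicit Defensive.


Section Idx.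
Variables (R : realType) (n : nat).
Local Notation N := (n.+1 + n)%N.
Local Notation H := (n.+1 + n.+1)%N.

Definition eN : N = (n + n.+1)%N := esym (addnS n n).
Definition castI (k : 'I_N) : 'I_(n + n.+1) := cast_ord eN k.

Lemma val_castI k : (castI k : nat) = k.
Proof. by []. Qed.

Lemma val_rshift m m' (i : 'I_m') : (rshift m i : nat) = (m + i)%N.
Proof. by []. Qed.
Lemma val_lshift m m' (i : 'I_m) : (lshift m' i : nat) = i.
Proof. by []. Qed.

Lemma val_lift m (h : 'I_m) (i : 'I_m.-1) : (lift h i : nat) = bump h i.
Proof. by []. Qed.

Lemma val_liftS m (h : 'I_m.+1) (i : 'I_m) : (lift h i : nat) = bump h i.
Proof. by []. Qed.

Lemma xatE (c : ccoord R n) m (Hm : (m < n)%N) : xat c m = c (rshift n.+1 (Ordinal Hm)).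
Proof. by rewrite /xat insubT. Qed.

Lemma bumpE h i : bump h i = (if (h <= i)%N then i.+1 else i).
Proof. by rewrite /bump; case: ifP => _; rewrite ?add1n. Qed.

Lemma chart_inv_lift (alpha : 'I_n.+1) (c : ccoord R n) (k : 'I_N) :
  chart_inv alpha c (lift (rshift n.+1 alpha) (castI k)) = c k.
Proof.
have := ltn_ord alpha; have := ltn_ord k.
rewrite /chart_inv; case: splitP => [j|kk]; rewrite val_lift val_castI bumpE val_rshift => Hj.
  have := ltn_ord j.
  move=> ? ? ?; congr c; apply: ord_inj; rewrite val_lshift; move: Hj; case: ifP => h; lia.
have kkn := ltn_ord kk.
move: Hj; case: ifP => h Hj ? ?.
  have -> : ((kk : nat) == alpha) = false by apply/eqP; lia.
  have -> : ((kk : nat) < alpha)%N = false by apply/negbTE; rewrite -leqNgt; lia.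
  have Hm : (kk.-1 < n)%N by lia.
  rewrite (xatE _ Hm); congr c; apply: ord_inj; rewrite val_rshift /=; lia.
have -> : ((kk : nat) == alpha) = false by apply/eqP; lia.
have -> : ((kk : nat) < alpha)%N by lia.
have Hm : (kk < n)%N by lia.
rewrite (xatE _ Hm); congr c; apply: ord_inj; rewrite val_rshift /=; lia.
Qed.

Lemma chart_inv_alpha (alpha : 'I_n.+1) (c : ccoord R n) :
  chart_inv alpha c (rshift n.+1 alpha) = 1.
Proof.
have := ltn_ord alpha.
rewrite /chart_inv; case: splitP => [j|kk]; rewrite val_rshift => Hj ?.
  by have := ltn_ord j; lia.
have -> : kk = alpha by apply: ord_inj; lia.
by rewrite eqxx.
Qed.

Lemma chart_lift (beta : 'I_n.+1) (y : hpoint R n) (l : 'I_N) :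
  chart beta y l = y (lift (rshift n.+1 beta) (castI l)) / y (rshift n.+1 beta).
Proof.
have := ltn_ord beta; have := ltn_ord l.
rewrite /chart; case: splitP => [j|kk] Hj ? ?.
  rewrite /zp /zpp; congr (y _ / _); apply: ord_inj.
  rewrite val_lift val_castI bumpE val_rshift val_lshift; have := ltn_ord j; case: ifP => h; lia.
have kkn := ltn_ord kk.
rewrite /zpp; case: ifP => h; congr (y _ / _); apply: ord_inj;
  rewrite val_lift val_castI bumpE !val_rshift inordK; try lia;
  case: ifP => h2; lia.
Qed.

Lemma lift_rshift (a : 'I_n.+1) (k : 'I_n) :
  lift (rshift n.+1 a) (castI (rshift n.+1 k)) = rshift n.+1 (lift a k).
Proof.
apply: ord_inj; rewrite val_lift val_castI !val_rshift val_liftS !bumpE.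
have := ltn_ord a; have := ltn_ord k. by case: ifP => h; case: ifP => h2 => *; lia.
Qed.

Lemma sumH (V : nmodType) (F : 'I_H -> V) (a : 'I_H) :
  \sum_j F j = F a + \sum_(k : 'I_N) F (lift a (castI k)).
Proof.
rewrite (bigD1_ord a) //=; congr (_ + _).
rewrite (reindex castI) //; exists (cast_ord (esym eN)) => x _.
  exact: cast_ordK.
exact: cast_ordKV.
Qed.

End Idx.


Section Calc.
Variables (R : realType) (n : nat).
Local Notation N := (n.+1 + n)%N.
Local Notation rc := 'rV[R]_(N + N).
Local Notation cc := (ccoord R n).

Lemma ReD (u v : R[i]) : complex.Re (u + v) = complex.Re u + complex.Re v.
Proof. by case: u => a b; case: v. Qed.
Lemma ImD (u v : R[i]) : complex.Im (u + v) = complex.Im u + complex.Im v.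
Proof. by case: u => a b; case: v. Qed.
Lemma ReM (u v : R[i]) : complex.Re (u * v) = complex.Re u * complex.Re v - complex.Im u * complex.Im v.
Proof. by case: u => a b; case: v. Qed.
Lemma ImM (u v : R[i]) : complex.Im (u * v) = complex.Re u * complex.Im v + complex.Im u * complex.Re v.
Proof. by case: u => a b; case: v. Qed.

Lemma scaleRE (a b : R) : a *: b = a * b. Proof. by []. Qed.

Definition lf (a c : cc) : R[i] := \sum_k a k * c k.

Definition CD (f : rc -> R[i]) (w : rc) (a : cc) : Prop :=
  is_diff w (fun x => complex.Re (f x)) (fun v => complex.Re (lf a (cplx v))) /\
  is_diff w (fun x => complex.Im (f x)) (fun v => complex.Im (lf a (cplx v))).

Lemma is_diff_ext (V W : normedModType R) (f f' df df' : V -> W) x :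
  f =1 f' -> df =1 df' -> is_diff x f df -> is_diff x f' df'.
Proof. by move=> /funext <- /funext <-. Qed.

Lemma CD_ext f g w a b : f =1 g -> a =1 b -> CD f w a -> CD g w b.
Proof. by move=> /funext <- /funext <-. Qed.

Lemma CD_cst (b : R[i]) w : CD (fun _ => b) w (fun _ => 0).
Proof.
have E : forall c, lf (fun _ => 0) c = 0 by move=> c; rewrite /lf big1 // => k _; rewrite mul0r.
split; (apply: is_diff_ext (is_diff_cst _ w); [by []| by move=> v; rewrite E]).
Qed.

Lemma is_diff_coord p (i : 'I_p) (x : 'rV[R]_p) :
  is_diff x (fun N : 'rV[R]_p => N 0 i) (fun N => N 0 i).
Proof.
have @f : {linear 'rV[R]_p -> R}.
  by exists (fun N : 'M[R]_(_, _) => N 0 i); do 2![eexists]; do ?[constructor];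
     rewrite ?mxE// => ? *; rewrite ?mxE//; move=> ?; rewrite !mxE.
rewrite (_ : (fun _ => _) = f) //; apply: DiffDef.
  exact/linear_differentiable/coord_continuous.
by rewrite diff_lin //; apply: coord_continuous.
Qed.

Definition cdelta (k : 'I_N) : cc := fun m => (m == k)%:R.

Lemma lf_delta k c : lf (cdelta k) c = c k.
Proof.
rewrite /lf (bigD1 k) //= big1 ?addr0 /cdelta ?eqxx ?mul1r // => m /negbTE ->.
by rewrite mul0r.
Qed.

Lemma CD_coord (k : 'I_N) w : CD (fun x => cplx x k) w (cdelta k).
Proof.
split; (apply: is_diff_ext (is_diff_coord _ w); [by [] | by move=> v; rewrite lf_delta]).
Qed.

Lemma lfD a b c : lf (fun m => a m + b m) c = lf a c + lf b c.
Proof. by rewrite /lf -big_split; apply: eq_bigr => k _; rewrite mulrDl. Qed.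

Lemma lfZ u a c : lf (fun m => u * a m) c = u * lf a c.
Proof. by rewrite /lf mulr_sumr; apply: eq_bigr => k _; rewrite mulrA. Qed.

Lemma CD_add f g w a b : CD f w a -> CD g w b ->
  CD (fun x => f x + g x) w (fun m => a m + b m).
Proof.
move=> [fr fi] [gr gi]; split.
  apply: is_diff_ext (is_diffD fr gr); first by move=> x; rewrite ReD.
  by move=> v; rewrite lfD ReD.
apply: is_diff_ext (is_diffD fi gi); first by move=> x; rewrite ImD.
by move=> v; rewrite lfD ImD.
Qed.

Lemma CD_mul f g w a b : CD f w a -> CD g w b ->
  CD (fun x => f x * g x) w (fun m => f w * b m + g w * a m).
Proof.
move=> [fr fi] [gr gi]; split.
  apply: is_diff_ext (is_diffB (is_diffM fr gr) (is_diffM fi gi)).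
    by move=> x; rewrite ReM.
  by move=> v; rewrite lfD !lfZ /= ReD !ReM !fctE /= !scaleRE; lra.
apply: is_diff_ext (is_diffD (is_diffM fr gi) (is_diffM fi gr)).
  by move=> x; rewrite ImM.
by move=> v; rewrite lfD !lfZ /= ImD !ImM !fctE /= !scaleRE; lra.
Qed.


Lemma ReV (z : R[i]) : complex.Re z^-1 = complex.Re z / (complex.Re z ^+ 2 + complex.Im z ^+ 2).
Proof. by case: z. Qed.
Lemma ImV (z : R[i]) : complex.Im z^-1 = - (complex.Im z / (complex.Re z ^+ 2 + complex.Im z ^+ 2)).
Proof. by case: z. Qed.
Lemma ReN (z : R[i]) : complex.Re (- z) = - complex.Re z.
Proof. by case: z. Qed.
Lemma ImN (z : R[i]) : complex.Im (- z) = - complex.Im z.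
Proof. by case: z. Qed.

Lemma s2_neq0 (z : R[i]) : z != 0 -> complex.Re z ^+ 2 + complex.Im z ^+ 2 != 0.
Proof.
case: z => u v /= nz; apply/negP => /eqP h; move/negP: nz; apply.
have hu : u = 0 by nra.
have hv : v = 0 by nra.
by rewrite hu hv.
Qed.

Lemma CD_inv f w a : CD f w a -> f w != 0 ->
  CD (fun x => (f x)^-1) w (fun m => - (f w ^+ 2)^-1 * a m).
Proof.
move=> [fr fi] fw0.
pose s x := complex.Re (f x) * complex.Re (f x) + complex.Im (f x) * complex.Im (f x).
have sw0 : s w != 0 by rewrite /s -!expr2; exact: s2_neq0.
have ds := is_diffD (is_diffM fr fr) (is_diffM fi fi).
have dsi : is_diff w (fun x => (s x)^-1) (- (s w) ^- 2 \*: 'd s w).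
  apply: DiffDef; first exact: differentiableV (ex_diff) sw0.
  by rewrite diffV //; exact: ex_diff.
rewrite (@diff_val _ _ _ _ _ _ _ ds) in dsi.
have E : forall x, complex.Re (f x) ^+ 2 + complex.Im (f x) ^+ 2 = s x by move=> x; rewrite /s !expr2.
move: (fw0); case E1 : (f w) => [u v] fw0'.
have su : s w = u ^+ 2 + v ^+ 2 by rewrite -E E1.
have s0 : u ^+ 2 + v ^+ 2 != 0 by rewrite -su.
split.
  apply: is_diff_ext (is_diffM fr dsi); first by move=> x; rewrite ReV E.
  move=> c; rewrite lfZ /= !fctE /= !scaleRE ReM ReN ImN ReV ImV -E E1 /=.
  case: (lf a (cplx c)) => du dv /=.
  have D : (u * u - v * v) ^+ 2 + (u * v + v * u) ^+ 2 = (u ^+ 2 + v ^+ 2) ^+ 2 by ring.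
  by rewrite D; field.
apply: is_diff_ext (is_diffN (is_diffM fi dsi)); first by move=> x; rewrite ImV E.
move=> c; rewrite lfZ /= !fctE /= !scaleRE ImM ReN ImN ReV ImV -E E1 /=.
case: (lf a (cplx c)) => du dv /=.
have D : (u * u - v * v) ^+ 2 + (u * v + v * u) ^+ 2 = (u ^+ 2 + v ^+ 2) ^+ 2 by ring.
by rewrite D; field.
Qed.

Lemma CD_sum (I : eqType) (s : seq I) (f : I -> 'rV[R]_(N + N) -> R[i]) w (a : I -> cc) :
  (forall i, CD (f i) w (a i)) ->
  CD (fun x => \sum_(i <- s) f i x) w (fun m => \sum_(i <- s) a i m).
Proof.
move=> h; elim: s => [|i s IH].
  apply: CD_ext (CD_cst 0 w) => [x|m]; by rewrite big_nil.
apply: CD_ext (CD_add (h i) IH) => [x|m]; by rewrite big_cons.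
Qed.

End Calc.


Section Jac.
Variables (R : realType) (n : nat).
Local Notation N := (n.+1 + n)%N.
Local Notation cc := (ccoord R n).

Definition realmat (X : 'M[R[i]]_N) : 'M[R]_(N + N) :=
  \matrix_(i, j) match fintype.split i, fintype.split j with
  | inl k, inl l => complex.Re (X k l)
  | inl k, inr l => complex.Im (X k l)
  | inr k, inl l => - complex.Im (X k l)
  | inr k, inr l => complex.Re (X k l) end.

Lemma is_diff_sum (V W : normedModType R) (I : eqType) (s : seq I) (f df : I -> V -> W) x :
  (forall i, is_diff x (f i) (df i)) ->
  is_diff x (fun z => \sum_(i <- s) f i z) (fun v => \sum_(i <- s) df i v).
Proof.
move=> h; elim: s => [|i s IH].
  by apply: is_diff_ext (is_diff_cst 0 x) => z; rewrite big_nil.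
by apply: is_diff_ext (is_diffD (h i) IH) => z; rewrite big_cons.
Qed.

Lemma is_diffZl' (V W : normedModType R) (k dk : V -> R) (f : W) x :
  is_diff x k dk -> is_diff x (fun z => k z *: f) (fun z => dk z *: f).
Proof.
move=> hk; apply: DiffDef; first exact: differentiableZl (ex_diff).
by rewrite diffZl ?diff_val //; exact: ex_diff.
Qed.

Lemma row_delta_entry p (c : 'I_p -> R) (k : 'I_p) :
  (\sum_j c j *: (delta_mx 0 j : 'rV[R]_p)) 0 k = c k.
Proof.
rewrite summxE (bigD1 k) //= big1 ?addr0.
  by rewrite !mxE !eqxx mulr1.
by move=> j /negbTE hj; rewrite !mxE eq_sym hj andbF mulr0.
Qed.

Lemma cplx_delta_l (k : 'I_N) : cplx (delta_mx 0 (lshift N k) : 'rV[R]_(N + N)) = @cdelta R n k.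
Proof.
apply/funext => m; rewrite /cplx /cdelta !mxE eqxx /=.
have -> : (rshift N m == lshift N k) = false.
  by apply/negbTE; rewrite eq_sym; apply/eqP => /(congr1 val) /=; have := ltn_ord k; lia.
have -> : (lshift N m == lshift N k) = (m == k).
  by apply/eqP/eqP => [/(congr1 val)/= h|->]; [apply: ord_inj|].
by case: (m == k).
Qed.

Lemma cplx_delta_r (k : 'I_N) : cplx (delta_mx 0 (rshift N k) : 'rV[R]_(N + N)) = (fun m => 'i * @cdelta R n k m).
Proof.
apply/funext => m; rewrite /cplx /cdelta !mxE eqxx /=.
have -> : (lshift N m == rshift N k) = false.
  by apply/negbTE; apply/eqP => /(congr1 val) /=; have := ltn_ord m; lia.
have -> : (rshift N m == rshift N k) = (m == k).
  by apply/eqP/eqP => [/(congr1 val)/= h|->]; [apply: ord_inj; lia|].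
by case: (m == k); rewrite /= ?mulr1 ?mulr0.
Qed.

Lemma lf_cdelta (a : cc) k : lf a (@cdelta R n k) = a k.
Proof.
rewrite /lf (bigD1 k) //= big1 ?addr0 /cdelta ?eqxx ?mulr1 // => m /negbTE ->.
by rewrite mulr0.
Qed.

Lemma lf_icdelta (a : cc) k : lf a (fun m => 'i * @cdelta R n k m) = 'i * a k.
Proof.
rewrite /lf (bigD1 k) //= big1 ?addr0 /cdelta ?eqxx ?mulr1 ?[_ * 'i%C]mulrC // => m /negbTE ->.
by rewrite mulr0 mulr0.
Qed.


Definition dFj (A : 'I_N -> cc) (j : 'I_(N + N)) (v : 'rV[R]_(N + N)) : R :=
  match fintype.split j with
  | inl l => complex.Re (lf (A l) (cplx v))
  | inr l => complex.Im (lf (A l) (cplx v)) end.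

Lemma jac_realmat (F : 'rV[R]_(N + N) -> 'rV[R]_(N + N)) w
  (Fc : 'I_N -> 'rV[R]_(N + N) -> R[i]) (A : 'I_N -> cc) :
  (forall x, F x = realify (fun l => Fc l x)) -> (forall l, CD (Fc l) w (A l)) ->
  'J F w = realmat (\matrix_(k, l) A l k).
Proof.
move=> hF hA.
have dF0 : is_diff w (fun z => \sum_(j <- index_enum 'I_(N + N)) F z 0 j *: (delta_mx 0 j : 'rV[R]_(N + N)))
     (fun v => \sum_(j <- index_enum 'I_(N + N)) dFj A j v *: (delta_mx 0 j : 'rV[R]_(N + N))).
  apply: is_diff_sum => j; apply: is_diffZl'.
  have h : is_diff w (fun x => match fintype.split j with
      | inl l => complex.Re (Fc l x) | inr l => complex.Im (Fc l x) end) (dFj A j).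
    rewrite /dFj; case: (fintype.split j) => l; [exact: (hA l).1 | exact: (hA l).2].
  by apply: is_diff_ext h => // x; rewrite hF /realify mxE.
have dF : is_diff w F (fun v => \sum_j dFj A j v *: (delta_mx 0 j : 'rV[R]_(N + N))).
  by apply: is_diff_ext dF0 => [x|v] //; rewrite [RHS]row_sum_delta.
rewrite /jacobian (@diff_val _ _ _ _ _ _ _ dF).
apply/matrixP => i j; rewrite !mxE row_delta_entry /dFj.
rewrite -[in delta_mx 0 i](splitK i).
case: (fintype.split i) => k /=.
  rewrite cplx_delta_l.
  by case: (fintype.split j) => l; rewrite mxE lf_cdelta.
rewrite cplx_delta_r.
by case: (fintype.split j) => l; rewrite mxE lf_icdelta ?ReM ?ImM /=; ring.
Qed.

End Jac.


Section Det.
Variables (R : realType) (n : nat).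
Local Notation N := (n.+1 + n)%N.

Lemma cplx_eq (u v : R[i]) : complex.Re u = complex.Re v -> complex.Im u = complex.Im v -> u = v.
Proof. by case: u => a b; case: v => c d /= -> ->. Qed.

Lemma split_l m' (k : 'I_N) : fintype.split (lshift m' k) = inl k.
Proof. exact: (unsplitK (inl _ k)). Qed.
Lemma split_r (k : 'I_N) : fintype.split (rshift N k) = inr k.
Proof. exact: (unsplitK (inr _ k)). Qed.

Lemma det_realmat (X : 'M[R[i]]_N) : \det (realmat X) = sqmod (\det X).
Proof.
pose Xr := map_mx (fun z : R[i] => real_complex R (complex.Re z)) X.
pose Xi := map_mx (fun z : R[i] => real_complex R (complex.Im z)) X.
have EM : map_mx (real_complex R) (realmat X) = block_mx Xr Xi (- Xi) Xr.
  apply/matrixP => i j; rewrite -(splitK i) -(splitK j).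
  case: (fintype.split i) => k; case: (fintype.split j) => l;
    rewrite /= ?block_mxEul ?block_mxEur ?block_mxEdl ?block_mxEdr !mxE ?split_l ?split_r //=.
  by rewrite rmorphN.
pose P := block_mx (1%:M : 'M[R[i]]_N) ('i%C%:M) 0 1%:M.
pose Q := block_mx (1%:M : 'M[R[i]]_N) ((- 'i%C)%:M) 0 1%:M.
have dP : \det P = 1 by rewrite det_ublock !det1 mulr1.
have dQ : \det Q = 1 by rewrite det_ublock !det1 mulr1.
have EPMQ : P *m block_mx Xr Xi (- Xi) Xr *m Q =
    block_mx (map_mx conjc X) 0 (- Xi) X.
  rewrite !mulmx_block !mul1mx !mul0mx !mulmx1 !mulmx0 !mul_scalar_mx !mul_mx_scalar.
  rewrite !add0r !addr0.
  congr block_mx; apply/matrixP => i j; rewrite !mxE; case: (X i j) => a b;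
    apply: cplx_eq; rewrite /= ; ring.
have := congr1 determinant EPMQ.
rewrite !det_mulmx dP dQ mul1r mulr1 det_lblock det_map_mx -EM det_map_mx.
case: (\det X) => a b /= h; apply: complexI; rewrite h /sqmod.
by apply: cplx_eq; rewrite /=; ring.
Qed.

End Det.


Section DetJ.
Variables (R : realType) (n : nat).
Local Notation N := (n.+1 + n)%N.
Local Notation H := (n.+1 + n.+1)%N.

Lemma det_cast p q (e : p = q) (A : 'M[R[i]]_q) :
  \det (\matrix_(i, j) A (cast_ord e i) (cast_ord e j)) = \det A.
Proof.
case: q / e A => A; congr determinant; apply/matrixP => i j.
by rewrite mxE !cast_ord_id.
Qed.

Lemma sum_delta_r p (f : 'I_p -> R[i]) j : \sum_k f k * (k == j)%:R = f j.
Proof.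
rewrite (bigD1 j) //= eqxx mulr1 big1 ?addr0 // => k /negbTE ->.
by rewrite mulr0.
Qed.

Lemma sum_delta_l p (f : 'I_p -> R[i]) j : \sum_k (j == k)%:R * f k = f j.
Proof.
rewrite (bigD1 j) //= eqxx mul1r big1 ?addr0 // => k; rewrite eq_sym => /negbTE ->.
by rewrite mul0r.
Qed.

Lemma sign_even (k : nat) : (-1) ^+ (k + k) = 1 :> R[i].
Proof. by rewrite addnn -mul2n exprM sqrrN expr1n expr1n. Qed.

Lemma lift_eq m (h : 'I_m) (p q : 'I_m.-1) : (lift h p == lift h q) = (p == q).
Proof. exact: (inj_eq (@lift_inj _ h)). Qed.

Lemma lift_neq m (h : 'I_m) (p : 'I_m.-1) : (lift h p == h) = false.
Proof. by apply/negbTE; rewrite eq_sym neq_lift. Qed.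

Variables (g : 'M[R[i]]_H) (alpha beta : 'I_n.+1) (z : 'I_H -> R[i]).
Local Notation a' := (rshift n.+1 alpha).
Local Notation b' := (rshift n.+1 beta).
Hypothesis za : z a' = 1.
Let y i := \sum_j g i j * z j.
Let den := y b'.
Hypothesis den0 : den != 0.

Definition Jc (k l : 'I_N) : R[i] :=
  y (lift b' (castI l)) * (- (den ^+ 2)^-1 * g b' (lift a' (castI k)))
  + den^-1 * g (lift b' (castI l)) (lift a' (castI k)).

Lemma det_Jc_main : \det g * 1 = \det (\matrix_(k, l) Jc k l) * den ^+ N.+1 * (-1) ^+ (b' + a').
Proof.
pose T : 'M[R[i]]_H := \matrix_(i, j) if j == a' then z i else (i == j)%:R.
pose S : 'M[R[i]]_H := \matrix_(i, j) ((i == j)%:R - (if (i != b') && (j == b') then y i / den else 0)).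
have dT : \det T = 1.
  rewrite (expand_det_row _ a') (bigD1 a') //= big1 ?addr0.
    rewrite /cofactor sign_even mul1r !mxE eqxx za mul1r -[RHS](det1 _ (n + n.+1)%N).
    congr determinant; apply/matrixP => p q; rewrite !mxE lift_neq lift_eq.
    by [].
  by move=> j /negbTE hj; rewrite !mxE hj eq_sym hj mul0r.
have dS : \det S = 1.
  rewrite (expand_det_row _ b') (bigD1 b') //= big1 ?addr0.
    rewrite /cofactor sign_even mul1r !mxE eqxx /= subr0 mul1r -[RHS](det1 _ (n + n.+1)%N).
    congr determinant; apply/matrixP => p q; rewrite !mxE lift_eq !lift_neq andbF subr0.
    by [].
  by move=> j /negbTE hj; rewrite !mxE eq_sym hj andbF subr0 mul0r.
have gT : forall i j, (g *m T) i j = if j == a' then y i else g i j.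
  move=> i j; rewrite mxE; case: ifP => hj.
    by apply: eq_bigr => k _; rewrite mxE hj.
  by rewrite -[RHS](sum_delta_r (g i)); apply: eq_bigr => k _; rewrite mxE hj.
have SgT : forall i j, (S *m (g *m T)) i j =
    (g *m T) i j - (if i != b' then y i / den * (g *m T) b' j else 0).
  move=> i j; rewrite mxE.
  under eq_bigr => k _ do rewrite mxE mulrBl.
  rewrite sumrB sum_delta_l; congr (_ - _).
  case: ifP => hi.
    rewrite (bigD1 b') //= eqxx big1 ?addr0 // => k /negbTE ->.
    by rewrite mul0r.
  by rewrite big1 // => k _; rewrite mul0r.
have dM : \det (S *m (g *m T)) = \det g by rewrite !det_mulmx dS dT mul1r mulr1.
rewrite mulr1 -dM (expand_det_col _ a') (bigD1 b') //= big1 ?addr0; last first.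
  move=> i /negbTE hi; rewrite SgT gT eqxx hi /= gT eqxx.
  by rewrite -/den divfK // subrr mul0r.
rewrite SgT gT eqxx eqxx /= subr0 /cofactor.
have -> : row' b' (col' a' (S *m (g *m T))) =
    den *: (\matrix_(p, q) (\matrix_(k, l) Jc k l) (cast_ord (esym (eN n)) p) (cast_ord (esym (eN n)) q) : 'M[R[i]]_(n + n.+1))^T.
  apply/matrixP => p q.
  rewrite (_ : row' b' (col' a' (S *m (g *m T))) p q = (S *m (g *m T)) (lift b' p) (lift a' q)); last by rewrite !mxE.
  rewrite [RHS]mxE [in RHS]mxE [in RHS]mxE SgT gT lift_neq lift_neq /= gT lift_neq /=.
  rewrite mxE /Jc /castI !cast_ordKV.
  by field.
rewrite detZ det_tr det_cast -/den.
rewrite (_ : (n.+1 + beta + (n.+1 + alpha))%N = (b' + a')%N) //.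
rewrite (_ : N.+1 = (n + n.+1).+1); last by rewrite addnS addSn.
rewrite exprS; ring.
Qed.

End DetJ.


Section Main.
Variables (R : realType) (n : nat).
Local Notation N := (n.+1 + n)%N.
Local Notation H := (n.+1 + n.+1)%N.

Lemma sqmodM (u v : R[i]) : sqmod (u * v) = sqmod u * sqmod v.
Proof. by case: u => a b; case: v => c d; rewrite /sqmod /=; ring. Qed.

Lemma sqmod_ge0 (u : R[i]) : 0 <= sqmod u.
Proof. by rewrite /sqmod addr_ge0 // sqr_ge0. Qed.

Lemma sqmod_gt0 (u : R[i]) : u != 0 -> 0 < sqmod u.
Proof. by move=> h; rewrite lt_def sqmod_ge0 andbT; exact: s2_neq0. Qed.

Lemma sqmodV (u : R[i]) : u != 0 -> sqmod (u^-1) = (sqmod u)^-1.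
Proof.
move=> h; have := s2_neq0 h; case: u h => a b _ h0.
rewrite /sqmod /= in h0 *; by field.
Qed.

Lemma sqmodX (u : R[i]) k : sqmod (u ^+ k) = sqmod u ^+ k.
Proof.
elim: k => [|k IH]; first by rewrite !expr0 /sqmod /=; ring.
by rewrite !exprS sqmodM IH.
Qed.

Lemma sqmod_sign k : sqmod ((-1) ^+ k : R[i]) = 1.
Proof. by rewrite sqmodX (_ : sqmod (-1) = 1) ?expr1n // /sqmod /=; ring. Qed.

Lemma sqmod1 : sqmod (1 : R[i]) = 1.
Proof. by rewrite /sqmod /=; ring. Qed.

Variables (g : 'M[R[i]]_H) (alpha beta : 'I_n.+1).
Local Notation a' := (rshift n.+1 alpha).
Local Notation b' := (rshift n.+1 beta).

Lemma CD_Y w (i : 'I_H) :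
  CD (fun x => act g (chart_inv alpha (cplx x)) i) w (fun m => g i (lift a' (castI m))).
Proof.
have h : forall k : 'I_N, CD (fun x => g i (lift a' (castI k)) * cplx x k) w
    (fun m => g i (lift a' (castI k)) * @cdelta R n k m + cplx w k * 0).
  by move=> k; exact: CD_mul (CD_cst _ w) (CD_coord k w).
have := CD_add (CD_cst (g i a') w) (CD_sum (index_enum 'I_N) h).
apply: CD_ext.
  move=> x; rewrite /act (sumH _ a') chart_inv_alpha mulr1; congr (_ + _).
  by apply: eq_bigr => k _; rewrite chart_inv_lift.
move=> m; rewrite add0r.
under eq_bigr => k _ do rewrite mulr0 addr0.
rewrite -[RHS](sum_delta_r (fun k => g i (lift a' (castI k))) m).
by apply: eq_bigr => k _; rewrite /cdelta eq_sym.
Qed.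


Lemma CD_F w (l : 'I_N) :
  let z := chart_inv alpha (cplx w) in
  (fun i => \sum_j g i j * z j) b' != 0 ->
  CD (fun x => chart beta (act g (chart_inv alpha (cplx x))) l) w
     (fun m => Jc g alpha beta z m l).
Proof.
move=> z hden.
have := CD_mul (CD_Y w (lift b' (castI l))) (CD_inv (CD_Y w b') hden).
apply: CD_ext; first by move=> x; rewrite chart_lift.
by move=> m; rewrite /Jc.
Qed.

End Main.

Lemma cplx_realify (R : realType) (n : nat) (c : ccoord R n) : cplx (realify c) = c.
Proof.
apply/funext => k; rewrite /cplx /realify !mxE split_l split_r.
by case: (c k).
Qed.

Theorem lemma7p2 (R : realType) (n : nat) (g : 'M[R[i]]_(n.+1 + n.+1)) :
  \det g = 1 -> \det (blkC g) != 0 ->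
  forall (alpha beta : 'I_n.+1) (w : rcoord R n),
    zpp (act g (chart_inv alpha (cplx w))) beta != 0 ->
    dens (gloc g alpha beta w) * \det ('J (gloc g alpha beta) w)
    = mu g (chart_inv alpha (cplx w)) ^+ (4 * n.+1) * dens w.
Proof.
move=> hg _ alpha beta w hden.
set z := chart_inv alpha (cplx w).
set y := act g z.
have hden' : (fun i => \sum_j g i j * z j) (rshift n.+1 beta) != 0 by [].
have hJ : 'J (gloc g alpha beta) w = realmat (\matrix_(k, l) Jc g alpha beta z k l).
  have := @jac_realmat R n (gloc g alpha beta) w
    (fun l x => chart beta (act g (chart_inv alpha (cplx x))) l)
    (fun l m => Jc g alpha beta z m l) (fun x => erefl) (fun l => @CD_F R n g alpha beta w l hden').
  by move=> ->; congr realmat; apply/matrixP => k l; rewrite !mxE.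
rewrite hJ det_realmat.
have := det_Jc_main (chart_inv_alpha alpha (cplx w)) hden'.
rewrite hg mulr1 => /(congr1 (@sqmod R)).
rewrite sqmod1 sqmodM sqmod_sign mulr1 sqmodM sqmodX -/z.
move=> EJ.
pose K := (2 * n.+1)%N.
pose Sz := \sum_(i < n.+1) sqmod (z (rshift n.+1 i)).
pose Sy := \sum_(i < n.+1) sqmod (y (rshift n.+1 i)).
pose sd := sqmod (y (rshift n.+1 beta)).
have sd0 : 0 < sd by apply: sqmod_gt0.
have Sz_eq : Sz = 1 + \sum_(k < n) sqmod (cplx w (rshift n.+1 k)).
  rewrite /Sz (bigD1_ord alpha) //= /z chart_inv_alpha sqmod1; congr (_ + _).
  by apply: eq_bigr => k _; rewrite -lift_rshift chart_inv_lift.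
have Sy_eq : Sy = sd + \sum_(k < n) sqmod (y (rshift n.+1 (lift beta k))).
  by rewrite /Sy (bigD1_ord beta).
have Sz0 : 0 < Sz.
  rewrite Sz_eq; apply: (lt_le_trans ltr01); rewrite lerDl.
  by apply: sumr_ge0 => k _; apply: sqmod_ge0.
have Sy0 : 0 < Sy.
  rewrite Sy_eq; apply: (lt_le_trans sd0); rewrite lerDl.
  by apply: sumr_ge0 => k _; apply: sqmod_ge0.
have dw : dens w = Sz ^- K by rewrite /dens Sz_eq.
have dg : dens (gloc g alpha beta w) = (Sy / sd) ^- K.
  rewrite /dens /gloc cplx_realify.
  have -> : \sum_(k < n) sqmod (chart beta (act g (chart_inv alpha (cplx w))) (rshift n.+1 k))
      = (Sy - sd) / sd.
    rewrite Sy_eq addrC addKr mulr_suml; apply: eq_bigr => k _.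
    rewrite chart_lift lift_rshift sqmodM sqmodV //.
  by congr (_ ^- _); field; rewrite gt_eqF.
have hmu : mu g z = Num.sqrt Sz / Num.sqrt Sy.
  rewrite /mu /norm_zpp; congr (_ / Num.sqrt _).
  apply: eq_bigr => i _; congr sqmod.
  transitivity (\sum_(j < n.+1) (g (rshift n.+1 i) (lshift n.+1 j) * z (lshift n.+1 j)
      + g (rshift n.+1 i) (rshift n.+1 j) * z (rshift n.+1 j))).
    by apply: eq_bigr => j _; rewrite /blkC /blkD !mxE.
  by rewrite /y /act big_split_ord big_split.
have EJ' : sqmod (\det (\matrix_(k, l) Jc g alpha beta z k l)) = (sd ^+ K)^-1.
  rewrite (_ : K = (n.+1 + n).+1); last by rewrite /K; lia.
  have sdK : sd ^+ (n.+1 + n).+1 != 0 by rewrite expf_neq0 // gt_eqF.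
  by apply: (mulIf sdK); rewrite mulVf //; exact: (esym EJ).
rewrite dg dw EJ' hmu.
rewrite (_ : (4 * n.+1)%N = (2 * K)%N); last by rewrite /K; lia.
rewrite [(_ / _) ^+ (2 * K)]exprM [in RHS]expr_div_n !sqr_sqrtr ?ltW //.
rewrite !expr_div_n.
have h1 : Sy ^+ K != 0 by rewrite expf_neq0 // gt_eqF.
have h2 : sd ^+ K != 0 by rewrite expf_neq0 // gt_eqF.
have h3 : Sz ^+ K != 0 by rewrite expf_neq0 // gt_eqF.
by field; rewrite h1 h2 h3.
Qed.
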